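(* Let $n\ge1$, $m\ge0$ and let $(v^0\sim v^1\sim\dots\sim v^d)$ be a geodesic in the dYoke graph $Z_{n,m}$. Then for every $0\le i\le m$, all steps along the geodesic that shift a unit between entries $i$ and $i+1$ shift in the same direction; i.e., there are no $1\le t,t'\le d$ with $v^t=\overleftarrow{s}_i(v^{t-1})$ and $v^{t'}=\overrightarrow{s}_i(v^{t'-1})$.
   Context: The dYoke graph $Z_{n,m}$ has vertices the tuples $v=(v_0,\dots,v_{m+1})$ with $v_0,v_{m+1}\in\mathbb{Z}_n$, $v_1,\dots,v_m\in\{-1,0,1\}$ and $\sum v_i\equiv0\pmod n$; $u\sim v$ iff $u=\overleftarrow{s}_i(v)$ or $u=\overrightarrow{s}_i(v)$ for some $0\le i\le m$, where $\overleftarrow{s}_i(v)$ (left shift) replaces $v_i,v_{i+1}$ by $v_i+1,v_{i+1}-1$ and $\overrightarrow{s}_i(v)$ (right shift) replaces them by $v_i-1,v_{i+1}+1$ (bucket entries $v_0,v_{m+1}$ computed mod $n$; the result must be a vertex). *)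

(* Defs.v *)
From mathcomp Require Import all_boot all_order all_algebra.
Unset Printing Implicit Defensive.
Import Order.TTheory GRing.Theory Num.Theory.
Local Open Scope ring_scope.

(* A tuple v = (v_0,...,v_{m+1}) is a finite function 'I_(m+2) -> int.
   Bucket entries v_0, v_{m+1} are elements of Z_n, represented by their
   canonical representatives in {0,...,n-1}. *)
Definition is_bucket (m : nat) (j : 'I_m.+2) : bool :=
  (val j == 0)%N || (val j == m.+1)%N.

Definition is_vertex (n m : nat) (v : {ffun 'I_m.+2 -> int}) : bool :=
  [forall j : 'I_m.+2,
     if is_bucket m j then (0 <= v j) && (v j < n%:Z)
     else (-1 <= v j) && (v j <= 1)]
  && (n%:Z %| \sum_(j < m.+2) v j)%Z.

Definition shift_by (n m : nat) (a b : int) (i : nat)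
  (v : {ffun 'I_m.+2 -> int}) : {ffun 'I_m.+2 -> int} :=
  [ffun j : 'I_m.+2 =>
     let x := if val j == i then v j + a
              else if val j == i.+1 then v j + b else v j in
     if is_bucket m j then (x %% n%:Z)%Z else x].

Definition lshift_dY (n m i : nat) (v : {ffun 'I_m.+2 -> int}) :=
  shift_by n m 1 (-1) i v.
Definition rshift_dY (n m i : nat) (v : {ffun 'I_m.+2 -> int}) :=
  shift_by n m (-1) 1 i v.

Definition adj (n m : nat) (u v : {ffun 'I_m.+2 -> int}) : Prop :=
  is_vertex n m u /\ is_vertex n m v /\
  exists i : nat, (i <= m)%N /\ (u = lshift_dY n m i v \/ u = rshift_dY n m i v).

Definition is_walk (n m : nat) (p : nat -> {ffun 'I_m.+2 -> int}) (d : nat)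
  : Prop :=
  is_vertex n m (p 0%N) /\ forall t : nat, (t < d)%N -> adj n m (p t.+1) (p t).

Definition is_geodesic (n m : nat) (p : nat -> {ffun 'I_m.+2 -> int})
  (d : nat) : Prop :=
  is_walk n m p d /\
  forall (q : nat -> {ffun 'I_m.+2 -> int}) (e : nat),
    is_walk n m q e -> q 0%N = p 0%N -> q e = p d -> (d <= e)%N.

(* Main.v *)
Require Import Defs.
From mathcomp Require Import all_boot all_order all_algebra.
From mathcomp Require Import zify ring lra.
From Stdlib Require Import Classical.
Import Order.TTheory GRing.Theory Num.Theory.
Local Open Scope ring_scope.

Definition dl (a b : int) (i k : nat) : int :=
  if k == i then a else if k == i.+1 then b else 0.

Lemma shiftE n m a b i v (k : 'I_m.+2) :
  shift_by n m a b i v k =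
  if is_bucket m k then ((v k + dl a b i (val k)) %% n%:Z)%Z
  else v k + dl a b i (val k).
Proof.
rewrite ffunE /dl /=.
by case: (nat_of_ord k == i); case: (nat_of_ord k == i.+1); rewrite /= ?addr0.
Qed.

Lemma shift_comm n m a b i c e j v :
  shift_by n m a b i (shift_by n m c e j v) =
  shift_by n m c e j (shift_by n m a b i v).
Proof.
apply/ffunP => k; rewrite !shiftE.
case: (is_bucket m k).
  by rewrite !modzDml addrAC.
by rewrite addrAC.
Qed.

Lemma dl_opp a b i k : dl (- a) (- b) i k = - dl a b i k.
Proof. by rewrite /dl; case: (k == i); case: (k == i.+1); rewrite ?oppr0. Qed.

Lemma shift_cancel n m a b i v :
  is_vertex n m v ->
  shift_by n m (- a) (- b) i (shift_by n m a b i v) = v.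
Proof.
move=> /andP [/forallP H _]; apply/ffunP => k; rewrite !shiftE dl_opp.
have := H k; case: (is_bucket m k) => Hk.
  by rewrite modzDml addrK modz_small.
by rewrite addrK.
Qed.

Lemma sum_dl m a b i : (i <= m)%N ->
  \sum_(k < m.+2) dl a b i (val k) = a + b.
Proof.
move=> Hi.
have -> : \sum_(k < m.+2) dl a b i (val k) =
   \sum_(k < m.+2) ((if val k == i then a else 0) + (if val k == i.+1 then b else 0)).
  apply: eq_bigr => k _; rewrite /dl.
  case: (val k =P i) => [E|_]; last by rewrite add0r.
  rewrite E.
  by rewrite eqn_leq ltnn andbF addr0.
rewrite big_split /=.
have E : forall (j : nat) (c : int), (j < m.+2)%N ->
    \sum_(k < m.+2) (if val k == j then c else 0) = c.
  move=> j c Hj; rewrite (bigD1 (Ordinal Hj)) //= eqxx big1 ?addr0 //.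
  move=> k Hk; case: ifP => //. move=> /eqP Ek. exfalso. move: Hk.
  have -> : k = Ordinal Hj by apply: val_inj; exact: Ek.
  by rewrite eqxx.
by rewrite !E //; lia.
Qed.

Lemma vertex_shift n m a b i v : (0 < n)%N -> (i <= m)%N -> a + b = 0 ->
  is_vertex n m v ->
  (forall k : 'I_m.+2, ~~ is_bucket m k ->
     (-1 <= shift_by n m a b i v k) && (shift_by n m a b i v k <= 1)) ->
  is_vertex n m (shift_by n m a b i v).
Proof.
move=> Hn Hi Hab /andP [_ Hs] Hint; apply/andP; split.
  apply/forallP => k; case Hb: (is_bucket m k); last by apply: Hint; rewrite Hb.
  rewrite shiftE Hb modz_ge0 ?ltz_pmod //; lia.
have -> : \sum_(k < m.+2) shift_by n m a b i v k =
  \sum_(k < m.+2) v k + \sum_(k < m.+2) dl a b i (val k)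
  - (\sum_(k < m.+2) (if is_bucket m k then ((v k + dl a b i (val k)) %/ n%:Z)%Z else 0)) * n%:Z.
  rewrite mulr_suml -big_split /= -sumrB; apply: eq_bigr => k _.
  rewrite shiftE; case: (is_bucket m k); last by rewrite mul0r subr0.
  rewrite {2}(divz_eq (v k + dl a b i k) n%:Z); ring.
rewrite sum_dl // Hab addr0 rpredB // dvdz_mull // dvdzz.
Qed.

Lemma vert_int n m v (k : 'I_m.+2) : is_vertex n m v -> ~~ is_bucket m k ->
  (-1 <= v k) && (v k <= 1).
Proof. by move=> /andP [/forallP /(_ k) H _] /negbTE Hk; rewrite Hk in H. Qed.

Lemma S_entry n m a b j v (k : 'I_m.+2) : ~~ is_bucket m k ->
  shift_by n m a b j v k = v k + dl a b j k.
Proof. by move=> /negbTE Hk; rewrite shiftE Hk. Qed.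

Lemma S_neq n m e j v (k : 'I_m.+2) : (e = 1 \/ e = -1) -> ~~ is_bucket m k ->
  (val k == j) || (val k == j.+1) ->
  shift_by n m e (- e) j v = shift_by n m (- e) (- - e) j v -> False.
Proof.
move=> He Hk Hkj E; have := congr1 (fun w : {ffun _ -> int} => w k) E; rewrite /= !S_entry // /dl.
case/orP: Hkj => /eqP ->; rewrite ?eqxx.
  move/addrI; lia.
have -> : (j.+1 == j) = false by elim: (j) {E}.
move/addrI; lia.
Qed.

Lemma walk_vertex n m p d : is_walk n m p d -> forall s, (s <= d)%N -> is_vertex n m (p s).
Proof.
move=> [H0 H] [|s] Hs //.
by have [? [? _]] := H s Hs.
Qed.

Lemma walk_step n m p d : is_walk n m p d -> forall u, (1 <= u <= d)%N ->
  exists j e, [/\ (j <= m)%N, (e = 1 \/ e = -1) & p u = shift_by n m e (- e) j (p u.-1)].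
Proof.
move=> [_ H] [|u] // /andP [_ Hu].
have [_ [_ [j [Hj [E|E]]]]] := H u Hu.
  by exists j, 1; split => //; left.
exists j, (-1); split => //; first by right.
Qed.

Lemma mono_le (f : nat -> int) a b :
  (forall u, (a < u <= b)%N -> f u.-1 <= f u) ->
  forall x y, (a <= x)%N -> (x <= y)%N -> (y <= b)%N -> f x <= f y.
Proof.
move=> H x y Hx; elim: y => [|y IH] Hxy Hyb.
  by move: Hxy; rewrite leqn0 => /eqP ->.
case: (ltngtP x y.+1) => [Hlt|Hgt|->] //; last by move: Hxy; rewrite leqNgt Hgt.
apply: (le_trans (IH _ _)) => //; first by lia.
by apply: (H y.+1); lia.
Qed.

Lemma range_mono (f : nat -> int) a b : (a <= b)%N ->
  ((forall u, (a < u <= b)%N -> f u.-1 <= f u) \/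
   (forall u, (a < u <= b)%N -> f u <= f u.-1)) ->
  (-1 <= f a) && (f a <= 1) -> (-1 <= f b) && (f b <= 1) ->
  forall s, (a <= s <= b)%N -> (-1 <= f s) && (f s <= 1).
Proof.
move=> Hab [H|H] Ha Hb s /andP [Has Hsb].
  have := mono_le _ _ _ H _ _ Has Hsb (leqnn b); have := mono_le _ _ _ H _ _ (leqnn a) Has Hsb.
  lia.
have H' : forall u, (a < u <= b)%N -> (fun x => - f x) u.-1 <= (fun x => - f x) u.
  by move=> u Hu /=; rewrite lerN2; apply: H.
have := mono_le _ _ _ H' _ _ Has Hsb (leqnn b); have := mono_le _ _ _ H' _ _ (leqnn a) Has Hsb.
move=> /=; lia.
Qed.

Lemma dich (f : nat -> int) a b (P : nat -> int -> Prop) :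
  (forall u, (a < u <= b)%N -> exists e,
      (e = 0 \/ ((e = 1 \/ e = -1) /\ P u e)) /\ f u = f u.-1 + e) ->
  (forall u1 u2, (a < u1 <= b)%N -> (a < u2 <= b)%N -> P u1 1 -> P u2 (-1) -> False) ->
  (forall u, (a < u <= b)%N -> f u.-1 <= f u) \/
  (forall u, (a < u <= b)%N -> f u <= f u.-1).
Proof.
move=> H W.
case: (classic (exists u, (a < u <= b)%N /\ P u 1)) => [[u1 [Hu1 P1]]|NP].
  left => u Hu; have [e [[->|[[->|->] Pe]] ->]] := H u Hu.
  - by rewrite addr0.
  - by rewrite lerDl.
  - by case: (W u1 u Hu1 Hu P1 Pe).
right => u Hu; have [e [[->|[[->|->] Pe]] ->]] := H u Hu.
- by rewrite addr0.
- by case: NP; exists u.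
- by rewrite gerDl.
Qed.

Lemma main_gap n m p d : (0 < n)%N -> is_geodesic n m p d ->
  forall g i t e, (i <= m)%N -> (e = 1 \/ e = -1) -> (1 <= t)%N -> (0 < g)%N ->
  (t + g <= d)%N ->
  p t = shift_by n m e (- e) i (p t.-1) ->
  p (t + g)%N = shift_by n m (- e) (- - e) i (p (t + g)%N.-1) -> False.
Proof.
move=> Hn [Hw Hmin] g; elim/ltn_ind: g => g IH i t e Hi He Ht Hg Htg Hs1 Hs2.
have W1 : forall u j e', (t < u)%N -> (u < t + g)%N -> (j <= m)%N ->
    (e' = 1 \/ e' = -1) -> p u = shift_by n m e' (- e') j (p u.-1) -> j <> i.
  move=> u j e' Htu Hug Hj He' Hu Eji; subst j.
  have [Ee|Ee] : e' = e \/ e' = - e by lia.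
  - subst e'.
    have E : (u + (t + g - u) = t + g)%N by lia.
    have L : (t + g - u < g)%N by lia.
    have := IH (t + g - u)%N L i u e Hi He; rewrite !E => X; apply: (X _ _ _ Hu Hs2); lia.
  - subst e'.
    have E : (t + (u - t) = u)%N by lia.
    have L : (u - t < g)%N by lia.
    have := IH (u - t)%N L i t e Hi He; rewrite !E => X; apply: (X _ _ _ Hs1 Hu); lia.
have W2 : forall j u1 u2 e1 (k : 'I_m.+2), (j <= m)%N -> (e1 = 1 \/ e1 = -1) ->
    ~~ is_bucket m k -> (val k == j) || (val k == j.+1) ->
    (t < u1 < t + g)%N -> (t < u2 < t + g)%N ->
    p u1 = shift_by n m e1 (- e1) j (p u1.-1) ->
    p u2 = shift_by n m (- e1) (- - e1) j (p u2.-1) -> False.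
  move=> j u1 u2 e1 k Hj He1 Hk Hkj Hu1 Hu2 P1 P2.
  case: (ltngtP u1 u2) => [Hlt|Hgt|Heq].
  - have E : (u1 + (u2 - u1) = u2)%N by lia.
    have L : (u2 - u1 < g)%N by lia.
    have := IH (u2 - u1)%N L j u1 e1 Hj He1; rewrite !E => X; apply: (X _ _ _ P1 P2); lia.
  - have E : (u2 + (u1 - u2) = u1)%N by lia.
    have L : (u1 - u2 < g)%N by lia.
    have He1' : (- e1 = 1 \/ - e1 = -1) by lia.
    have := IH (u1 - u2)%N L j u2 (- e1) Hj He1'; rewrite !E => X.
    have P1' : p u1 = shift_by n m (- - e1) (- - - e1) j (p u1.-1) by rewrite !opprK.
    apply: (X _ _ _ P2 P1'); lia.
  - subst u2; apply: (S_neq n m e1 j (p u1.-1) k) => //.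
    by rewrite -P1 -P2.
set b := (t + g)%N.-1.
have Hb : (t <= b)%N by rewrite /b; lia.
have Rng : forall k : 'I_m.+2, ~~ is_bucket m k -> (val k == i) || (val k == i.+1) ->
    forall s, (t <= s <= b)%N ->
    (-1 <= p s k + dl (- e) (- - e) i k) && (p s k + dl (- e) (- - e) i k <= 1).
  move=> k Hk Hki.
  have Hko := ltn_ord k.
  have [Hk0 Hkm] : (val k != 0)%N /\ (val k != m.+1)%N by move/norP: Hk => [].
  apply: (range_mono (fun s => p s k + dl (- e) (- - e) i k) t b Hb).
  - case/orP: Hki => /eqP Hki.
    + apply: (dich _ t b (fun u e0 => p u = shift_by n m (- e0) (- - e0) (i.-1) (p u.-1))).
        move=> u Hu.
        have Hu' : (1 <= u <= d)%N by rewrite /b in Hu; lia.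
        have [j [e' [Hj He' Hst]]] := walk_step _ _ _ _ Hw u Hu'.
        have Hji : j <> i by apply: (W1 u j e') => //; rewrite /b in Hu; lia.
        exists (dl e' (- e') j k); split; last by rewrite /= Hst S_entry // addrAC.
        rewrite /dl Hki.
        case: (i =P j) => [Eij|_]; first by case: Hji.
        case: (i =P j.+1) => [Eij|_]; last by left.
        right; split; first by lia.
        by rewrite Eij /= !opprK.
      move=> u1 u2 Hu1 Hu2 P1 P2.
      apply: (W2 (i.-1) u1 u2 (-1) k _ _ Hk _ _ _ P1 P2).
      * lia.
      * by right.
      * apply/orP; right; apply/eqP; lia.
      * rewrite /b in Hu1; lia.
      * rewrite /b in Hu2; lia.
    + apply: (dich _ t b (fun u e0 => p u = shift_by n m e0 (- e0) (i.+1) (p u.-1))).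
        move=> u Hu.
        have Hu' : (1 <= u <= d)%N by rewrite /b in Hu; lia.
        have [j [e' [Hj He' Hst]]] := walk_step _ _ _ _ Hw u Hu'.
        have Hji : j <> i by apply: (W1 u j e') => //; rewrite /b in Hu; lia.
        exists (dl e' (- e') j k); split; last by rewrite /= Hst S_entry // addrAC.
        rewrite /dl Hki.
        case: (i.+1 =P j) => [Eij|_].
          by right; split => //; rewrite -Eij in Hst.
        case: (i.+1 =P j.+1) => [Eij|_]; last by left.
        by case: Hji; case: Eij.
      move=> u1 u2 Hu1 Hu2 P1 P2.
      apply: (W2 (i.+1) u1 u2 1 k _ _ Hk _ _ _ P1 P2).
      * lia.
      * by left.
      * by apply/orP; left; apply/eqP.
      * rewrite /b in Hu1; lia.
      * rewrite /b in Hu2; lia.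
  - rewrite /= Hs1 S_entry // dl_opp addrK.
    by apply: vert_int => //; apply: (walk_vertex _ _ _ _ Hw); lia.
  - have -> : p b k + dl (- e) (- - e) i k = p (t + g)%N k by rewrite Hs2 S_entry.
    by apply: vert_int => //; apply: (walk_vertex _ _ _ _ Hw); lia.
set R := shift_by n m (- e) (- - e) i.
have He0 : - e + - - e = 0 by rewrite opprK addNr.
have WV : forall s, (t <= s <= b)%N -> is_vertex n m (R (p s)).
  move=> s Hs; apply: vertex_shift => //.
    by apply: (walk_vertex _ _ _ _ Hw); rewrite /b in Hs; lia.
  move=> k Hk; rewrite S_entry //.
  case: (boolP ((val k == i) || (val k == i.+1))) => H; first by apply: Rng.
  rewrite /dl; move/norP: H => [/negbTE -> /negbTE ->]; rewrite addr0.
  by apply: vert_int => //; apply: (walk_vertex _ _ _ _ Hw); rewrite /b in Hs; lia.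
have Rc : R (p t) = p t.-1.
  by rewrite /R Hs1 shift_cancel //; apply: (walk_vertex _ _ _ _ Hw); lia.
have Rc2 : R (p b) = p (t + g)%N by rewrite Hs2.
pose q := fun s => if (s < t)%N then p s else if (s <= (t + g).-2)%N then R (p s.+1)
                   else p s.+2.
have Q1 : forall s, (s < t)%N -> q s = p s by move=> s Hs; rewrite /q Hs.
have Q2 : forall s, (t.-1 <= s <= (t + g).-2)%N -> q s = R (p s.+1).
  move=> s Hs; rewrite /q; case: ifP => H1; last by move/andP: Hs => [_ ->].
  have -> : s = t.-1 by lia.
  by have -> : (t.-1).+1 = t by lia.
have Q3 : forall s, ((t + g).-2 <= s)%N -> q s = p s.+2.
  move=> s Hs; rewrite /q; case: ifP => H1.
    have Eg : g = 1%N by lia.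
    have Es : s = t.-1 by lia.
    have -> : s.+2 = (t + g)%N by lia.
    rewrite -Rc2 /b Es Eg -Rc; congr (R (p _)); lia.
  case: ifP => H2 //.
  have Es : s = (t + g).-2 by lia.
  have -> : s.+2 = (t + g)%N by lia.
  rewrite -Rc2 /b; congr (R (p _)); lia.
have Hq : is_walk n m q d.-2.
  split.
    by rewrite Q1 //; apply: (walk_vertex _ _ _ _ Hw).
  move=> s Hs.
  case: (ltnP s.+1 t) => H1.
    by rewrite !Q1 //; [apply: Hw.2; lia | lia].
  case: (leqP (t + g).-2 s) => H2.
    by rewrite !Q3 //; [apply: Hw.2; lia | lia].
  rewrite !Q2; try lia.
  split; first by apply: WV; rewrite /b; lia.
  split; first by apply: WV; rewrite /b; lia.
  have Hu' : (1 <= s.+2 <= d)%N by lia.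
  have [j [e' [Hj He' Hst]]] := walk_step _ _ _ _ Hw s.+2 Hu'.
  exists j; split => //.
  rewrite Hst /R shift_comm.
  case: He' => ->; first by left.
  by right; rewrite /rshift_dY opprK.
have := Hmin q d.-2 Hq (Q1 0%N Ht).
rewrite Q3; last by lia.
have -> : (d.-2).+2 = d by lia.
move=> /(_ erefl); lia.
Qed.

Local Close Scope ring_scope.

Theorem lemma5p17 (n m : nat) (p : nat -> {ffun 'I_m.+2 -> int}) (d : nat) :
  (1 <= n)%N ->
  is_geodesic n m p d ->
  forall i : nat, (i <= m)%N ->
  ~ (exists t t' : nat,
       [/\ (1 <= t <= d)%N, (1 <= t' <= d)%N, t <> t',
           p t = lshift_dY n m i (p t.-1) & p t' = rshift_dY n m i (p t'.-1)]).
Proof.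
move=> Hn Hg i Hi [t [t' [Ht Ht' Hne Hl Hr]]].
case: (ltngtP t t') => [Hlt|Hgt|Heq]; last by case: Hne.
- have E : (t + (t' - t))%N = t' by lia.
  apply: (main_gap n m p d Hn Hg (t' - t) i t 1%R Hi (or_introl erefl)); try lia.
    exact: Hl.
  by rewrite E opprK; exact: Hr.
- have E : (t' + (t - t'))%N = t by lia.
  apply: (main_gap n m p d Hn Hg (t - t') i t' (-1)%R Hi (or_intror erefl)); try lia.
    by rewrite opprK; exact: Hr.
  by rewrite E !opprK; exact: Hl.
Qed.
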